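(* Let $V$ be a compact subset of $\mathcal{A}_0$ such that $V^T$ is complete. Then $$V^{**}=(V^T)^{\perp}.$$
   Context: $D=\{z:|z|<1\}$, $\overline D$ its closure. $\mathcal{A}$ is the space of functions $f(z)=\sum_{k\ge0}a_k(f)z^k$ analytic in $D$, with the topology of locally uniform convergence; $\mathcal{A}_0=\{f\in\mathcal{A}: a_0(f)=1\}$. $\mathcal{A}(\overline D)$ is the set of functions analytic in some disk $\{|z|<R\}$ with $R>1$, and $\mathcal{A}_0(\overline D)=\{g\in\mathcal{A}(\overline D):a_0(g)=1\}$. The Hadamard product is $(f*g)(z)=\sum_{k\ge0}a_k(f)a_k(g)z^k$. For $V\subset\mathcal{A}_0$, $V^*=\{g\in\mathcal{A}_0:(f*g)(z)\ne0 \ \forall z\in D,\ \forall f\in V\}$, $V^{**}=(V^* )^*$, and $V^T=\{g\in\mathcal{A}_0(\overline D): (f*g)(1)\ne0 \ \forall f\in V\}$. For $U\subset\mathcal{A}_0(\overline D)$, $U^{\perp}=\{h\in\mathcal{A}_0:(g*h)(1)\ne0\ \forall g\in U\}$. For $x\in\overline D$, $(P_xf)(z)=f(xz)$; a set $W$ is complete if $P_xf\in W$ for all $f\in W$, $x\in\overline D$. *)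

(* Defs.v *)
(* complex numbers R[i] over R : realType (= C),
   power series represented by their coefficient sequences nat -> C. *)
From mathcomp Require Import all_boot all_order all_algebra.
From mathcomp Require Import boolp classical_sets reals.
From mathcomp Require Import complex.
Import Order.TTheory GRing.Theory Num.Theory.
Set Implicit Arguments. Unset Strict Implicit. Unset Printing Implicit Defensive.
Local Open Scope ring_scope.
Local Open Scope classical_set_scope.

Section Defs.
Variable R : realType.
Local Notation C := R[i].

Definition has_sum (u : nat -> C) (l : C) : Prop :=
  forall e : C, 0 < e -> exists N : nat, forall n : nat, (N <= n)%N ->
    `| \sum_(k < n) u k - l | < e.

Definition converges (u : nat -> C) : Prop := exists l, has_sum u l.

Definition pser (a : nat -> C) (z : C) : nat -> C := fun k => a k * z ^+ k.

Definition inA (a : nat -> C) : Prop :=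
  forall z : C, `|z| < 1 -> converges (pser a z).

Definition inA0 (a : nat -> C) : Prop := inA a /\ a 0%N = 1.

Definition inAbar (a : nat -> C) : Prop :=
  exists rho : C, 1 < rho /\ forall z : C, `|z| < rho -> converges (pser a z).

Definition inAbar0 (a : nat -> C) : Prop := inAbar a /\ a 0%N = 1.

Definition hadamard (a b : nat -> C) : nat -> C := fun k => a k * b k.

Definition dual (V : set (nat -> C)) : set (nat -> C) :=
  [set g | inA0 g /\ forall f, V f -> forall z : C, `|z| < 1 ->
             forall l, has_sum (pser (hadamard f g) z) l -> l <> 0].

Definition dualT (V : set (nat -> C)) : set (nat -> C) :=
  [set g | inAbar0 g /\ forall f, V f ->
             forall l, has_sum (pser (hadamard f g) 1) l -> l <> 0].

Definition perp (U : set (nat -> C)) : set (nat -> C) :=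
  [set h | inA0 h /\ forall g, U g ->
             forall l, has_sum (pser (hadamard g h) 1) l -> l <> 0].

(* (P_x f)(z) = f(xz) : coefficients a_k x^k *)
Definition Pop (x : C) (a : nat -> C) : nat -> C := fun k => a k * x ^+ k.

Definition complete (W : set (nat -> C)) : Prop :=
  forall f, W f -> forall x : C, `|x| <= 1 -> W (Pop x f).

(* Open sets of A for the topology of locally uniform convergence in D
   (given as traces U ∩ A): every f in U ∩ A has a basic neighbourhood
   { g in A | |g(z) - f(z)| < eps for all |z| <= r } (0 <= r < 1, eps > 0)
   contained in U. *)
Definition openA (U : set (nat -> C)) : Prop :=
  forall f, inA f -> U f ->
    exists r eps : C, [/\ 0 <= r, r < 1, 0 < eps &
      forall g, inA g ->
        (forall z : C, `|z| <= r -> forall lf lg : C,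
           has_sum (pser f z) lf -> has_sum (pser g z) lg -> `|lg - lf| < eps) ->
        U g].

Definition compactA (V : set (nat -> C)) : Prop :=
  V `<=` inA /\
  forall (I : Type) (O : I -> set (nat -> C)),
    (forall i, openA (O i)) ->
    (forall f, V f -> exists i, O i f) ->
    exists (n : nat) (t : 'I_n -> I), forall f, V f -> exists j, O (t j) f.

End Defs.

(* Main.v *)
Require Import Defs.
From mathcomp Require Import all_boot all_order all_algebra all_field all_solvable.
From mathcomp Require Import boolp classical_sets reals.
From mathcomp Require Import complex.
From mathcomp Require Import ring lra zify.
Import Order.TTheory GRing.Theory Num.Theory.
Local Open Scope ring_scope.
Local Open Scope complex_scope.
Local Open Scope classical_set_scope.
Set Implicit Arguments. Unset Strict Implicit. Unset Printing Implicit Defensive.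

Section Aux.
Variable R : realType.
Local Notation C := R[i].
Implicit Types (u v : nat -> C) (x y : C).

Lemma le_eps x y : x \is Num.real -> y \is Num.real ->
  (forall e : C, 0 < e -> x <= y + e) -> x <= y.
Proof.
move=> xr yr H; rewrite real_leNgt //; apply/negP => yx.
have e0 : 0 < (x - y) / 2 by rewrite divr_gt0 // subr_gt0.
have := H _ e0; rewrite -subr_ge0.
have -> : y + (x - y) / 2 - x = - ((x - y) / 2) by field.
by rewrite oppr_ge0 lt_geF.
Qed.

Lemma hs_ext u v l : (forall k, u k = v k) -> has_sum u l -> has_sum v l.
Proof.
move=> E H e e0; have [N HN] := H e e0; exists N => n Hn.
have -> : \sum_(k < n) v k = \sum_(k < n) u k by apply: eq_bigr => k _; rewrite E.
exact: HN.
Qed.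

Lemma hs_unique u l1 l2 : has_sum u l1 -> has_sum u l2 -> l1 = l2.
Proof.
move=> H1 H2; apply/eqP; apply/negPn/negP => ne.
have e0 : 0 < `|l1 - l2| / 2 by rewrite divr_gt0 // normr_gt0 subr_eq0.
have [N1 HN1] := H1 _ e0; have [N2 HN2] := H2 _ e0.
have h1 := HN1 (maxn N1 N2) (leq_maxl _ _).
have h2 := HN2 (maxn N1 N2) (leq_maxr _ _).
set S := \sum_(k < maxn N1 N2) u k in h1 h2.
have : `|l1 - l2| < `|l1 - l2| / 2 + `|l1 - l2| / 2.
  apply: (le_lt_trans (ler_distD S _ _)); rewrite distrC; exact: ltrD.
by rewrite -splitr ltxx.
Qed.

Lemma hs_add u v a b : has_sum u a -> has_sum v b ->
  has_sum (fun k => u k + v k) (a + b).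
Proof.
move=> Hu Hv e e0.
have e2 : 0 < e / 2 by rewrite divr_gt0.
have [N1 HN1] := Hu _ e2; have [N2 HN2] := Hv _ e2.
exists (maxn N1 N2) => n; rewrite geq_max => /andP[n1 n2].
rewrite big_split /= (splitr e).
have -> : \sum_(k < n) u k + \sum_(k < n) v k - (a + b) =
  (\sum_(k < n) u k - a) + (\sum_(k < n) v k - b) by ring.
apply: (le_lt_trans (ler_normD _ _)); apply: ltrD; [exact: HN1|exact: HN2].
Qed.

Lemma hs_scale u a c : has_sum u a -> has_sum (fun k => c * u k) (c * a).
Proof.
move=> Hu e e0; have [->|c0] := eqVneq c 0.
  by exists 0%N => n _; rewrite big1 ?mul0r ?subrr ?normr0 // => k; rewrite mul0r.
have ce : 0 < e / `|c| by rewrite divr_gt0 // normr_gt0.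
have [N HN] := Hu _ ce; exists N => n Hn.
rewrite -mulr_sumr -mulrBr normrM -ltr_pdivlMl ?normr_gt0 // mulrC.
exact: HN.
Qed.

Lemma hs_zero : has_sum (fun _ => 0 : C) 0.
Proof. by move=> e e0; exists 0%N => n _; rewrite big1 // subrr normr0. Qed.

Lemma hs_sum (N : nat) (w : nat -> nat -> C) (a : nat -> C) :
  (forall j, (j < N)%N -> has_sum (w j) (a j)) ->
  has_sum (fun k => \sum_(j < N) w j k) (\sum_(j < N) a j).
Proof.
elim: N => [|N IH] H.
  by rewrite big_ord0; apply: hs_ext hs_zero => k; rewrite big_ord0.
rewrite big_ord_recr /=.
have IH' := IH (fun j jN => H j (ltnW jN)).
apply: hs_ext (hs_add IH' (H N (ltnSn N))) => k.
by rewrite big_ord_recr.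
Qed.


Lemma hs_bounded u l : has_sum u l -> exists B, 0 <= B /\ forall k, `|u k| <= B.
Proof.
move=> H; have [N HN] := H 1 ltr01.
exists (2 + \sum_(j < N) `|u j|); split.
  by rewrite addr_ge0 ?sumr_ge0.
move=> k; case: (ltnP k N) => kN.
  rewrite (bigD1 (Ordinal kN)) //= addrCA ler_wpDr //.
  by rewrite addr_ge0 ?sumr_ge0.
have -> : u k = (\sum_(j < k.+1) u j - l) - (\sum_(j < k) u j - l).
  by rewrite big_ord_recr /=; ring.
apply: le_trans (ler_normB _ _) _.
rewrite -[X in X <= _]addr0 lerD //; last by rewrite sumr_ge0.
rewrite (_ : 2 = 1 + 1) //; apply: lerD; apply: ltW; apply: HN => //.
exact: leqW.
Qed.

Lemma pser_bound (a : nat -> C) (w : C) : converges (pser a w) ->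
  exists B, 0 <= B /\ forall k, `|a k| * `|w| ^+ k <= B.
Proof.
move=> [l Hl]; have [B [B0 HB]] := hs_bounded Hl; exists B; split => // k.
by rewrite -normrX -normrM; exact: HB.
Qed.

Lemma geo_le (q : C) n : 0 <= q -> q < 1 -> \sum_(k < n) q ^+ k <= (1 - q)^-1.
Proof.
move=> q0 q1; have qn1 : q - 1 != 0 by rewrite subr_eq0 lt_eqF.
have -> : \sum_(k < n) q ^+ k = (1 - q ^+ n) / (1 - q).
  apply: (mulIf qn1); rewrite mulrC -subrX1.
  have h : 1 - q != 0 by rewrite subr_eq0 eq_sym lt_eqF.
  by field.
rewrite ler_piMl ?invr_ge0 ?subr_ge0 ?(ltW q1) //.
by rewrite gerBl exprn_ge0.
Qed.

Lemma archiC (x y : C) : x \is Num.real -> 0 < y -> exists n : nat, x < y *+ n.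
Proof.
move=> xr y0; have xyr : x / y \is Num.real by rewrite realM // realV gtr0_real.
set a := complex.Re (x / y).
have ha : `|a| < (Num.Def.archi_bound `|a|)%:R := archi_boundP (normr_ge0 a).
exists (Num.Def.archi_bound `|a|).
rewrite -mulr_natl -ltr_pdivrMr // -(RRe_real xyr) -/a.
have -> : (Num.Def.archi_bound `|a|)%:R = ((Num.Def.archi_bound `|a|)%:R : R)%:C.
  by rewrite rmorph_nat.
rewrite ltcR; exact: le_lt_trans (ler_norm a) ha.
Qed.

Lemma bernoulli (h : C) n : 0 <= h -> 1 + h *+ n <= (1 + h) ^+ n.
Proof.
move=> h0; elim: n => [|n IH]; first by rewrite mulr0n addr0 expr0.
rewrite exprSr (le_trans _ (ler_wpM2r _ IH)) ?addr_ge0 //.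
have -> : (1 + h *+ n) * (1 + h) = 1 + h *+ n.+1 + (h *+ n) * h.
  by rewrite mulrSr; ring.
by rewrite lerDl mulr_ge0 // mulrn_wge0.
Qed.

Lemma expr_small (q e : C) : 0 <= q -> q < 1 -> 0 < e ->
  exists N, forall n, (N <= n)%N -> q ^+ n < e.
Proof.
move=> q0 q1 e0.
suff [N HN] : exists N, q ^+ N < e.
  exists N => n Hn; apply: le_lt_trans HN.
  exact: ler_wiXn2l (ltW q1) _ _ Hn.
have [->|qn0] := eqVneq q 0; first by exists 1%N; rewrite expr1.
have qp : 0 < q by rewrite lt_def qn0.
set h := q^-1 - 1.
have hp : 0 < h by rewrite subr_gt0 invf_gt1.
have [n Hn] := archiC (real1 C) (mulr_gt0 e0 hp).
exists n.
have nq : q ^+ n * (1 + h) ^+ n = 1.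
  by rewrite -exprMn /h addrC subrK mulfV // expr1n.
have H1 : q ^+ n * (h *+ n) <= 1.
  rewrite -nq ler_wpM2l ?exprn_ge0 //.
  apply: le_trans _ (bernoulli n (ltW hp)).
  by rewrite -[X in X <= _]add0r lerD2r ler01.
have hn0 : 0 < h *+ n.
  rewrite pmulrn_rgt0 // lt0n; apply/eqP => n0; move: Hn; rewrite n0 mulr0n.
  by rewrite ltr10.
rewrite -(ltr_pM2r hn0); apply: le_lt_trans H1 _.
by rewrite mulrnAr.
Qed.

Lemma prim_sum (N : nat) (w : C) m : N.-primitive_root w ->
  \sum_(j < N) (w ^+ m) ^+ j = if (N %| m)%N then N%:R else 0.
Proof.
move=> pw; case: ifP => Hd.
  move: Hd; rewrite (prim_order_dvd pw) => /eqP ->.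
  by rewrite (eq_bigr (fun _ => 1)) ?sumr_const ?card_ord // => j _; rewrite expr1n.
move: Hd; rewrite (prim_order_dvd pw) => /negbT Hne.
have : (w ^+ m - 1) * \sum_(j < N) (w ^+ m) ^+ j = 0.
  by rewrite -subrX1 -exprM mulnC exprM (prim_expr_order pw) expr1n subrr.
by move/eqP; rewrite mulf_eq0 subr_eq0 (negbTE Hne) /= => /eqP.
Qed.

Lemma norm_prim (N : nat) (w : C) : (0 < N)%N -> N.-primitive_root w -> `|w| = 1.
Proof.
move=> N0 pw; apply/eqP; rewrite -(pexpr_eq1 N0) ?normr_ge0 //.
by rewrite -normrX (prim_expr_order pw) normr1.
Qed.

Lemma C_prim n : (n > 0)%N -> exists z : C, n.-primitive_root z.
Proof.
pose p : {poly C} := 'X^n - 1; have [r Dp] := closed_field_poly_normal p.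
move=> n_gt0; rewrite (monicP _) ?monicXnsubC // scale1r in Dp.
have rn1: all n.-unity_root r by apply/allP=> z; rewrite -root_prod_XsubC -Dp.
have sz_r: (n < (size r).+1)%N.
  by rewrite -(size_prod_XsubC r id) -Dp size_XnsubC.
have [|z] := hasP (has_prim_root n_gt0 rn1 _ sz_r); last by exists z.
by rewrite -separable_prod_XsubC -Dp separable_Xn_sub_1 // pnatr_eq0 -lt0n.
Qed.

End Aux.

Section Aux3.
Variable R : realType.
Local Notation C := R[i].

Lemma dvd_aux (N0 k i : nat) : ((N0 + k).+1 %| i + ((N0 + k).+1 - k))%N ->
  (i != k) -> (N0 <= i)%N.
Proof. move=> /dvdnP [m Hm] ik; case: m Hm => [|[|m]] Hm; lia. Qed.

Lemma cauchy_est (d : nat -> C) (r M : C) : inA d -> 0 < r -> r < 1 ->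
  (forall z, `|z| <= r -> forall l, has_sum (pser d z) l -> `|l| <= M) ->
  forall k, `|d k| * r ^+ k <= M.
Proof.
move=> dA r0 r1 Hb k.
have [l0 Hl0] : converges (pser d 0) by apply: dA; rewrite normr0 ltr01.
have M0 : 0 <= M.
  by apply: le_trans (normr_ge0 l0) (Hb 0 _ _ Hl0); rewrite normr0 ltW.
set r2 := (r + 1) / 2; set r' := (r2 + 1) / 2.
have [rr2 r21] := midf_lt r1.
have [r2r' r'1] := midf_lt r21.
rewrite -/r2 in rr2 r21 r2r' r'1; rewrite -/r' in r2r' r'1.
have r2p : 0 < r2 := lt_trans r0 rr2.
have r'p : 0 < r' := lt_trans r2p r2r'.
set q1 := r / r2; set q2 := r2 / r'.
have q1p : 0 <= q1 by rewrite divr_ge0 ?ltW.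
have q2p : 0 <= q2 by rewrite divr_ge0 ?ltW.
have q11 : q1 < 1 by rewrite ltr_pdivrMr // mul1r.
have q21 : q2 < 1 by rewrite ltr_pdivrMr // mul1r.
have [B [B0 HB]] : exists B, 0 <= B /\ forall l, `|d l| * r' ^+ l <= B.
  have Hc : converges (pser d r') by apply: dA; rewrite ger0_norm ?ltW.
  have [B [B0 HB]] := pser_bound Hc.
  by exists B; split => // l; move: (HB l); rewrite (ger0_norm (ltW r'p)).
have Er : r = r' * q2 * q1.
  rewrite /q1 /q2; have h1 : r' != 0 := lt0r_neq0 r'p.
  have h2 : r2 != 0 := lt0r_neq0 r2p.
  by rewrite [r' * _]mulrC divfK // mulrC divfK.
clearbody q1 q2 r' r2.
have Hdl : forall l, `|d l| * r ^+ l <= B * q2 ^+ l * q1 ^+ l.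
  move=> l; rewrite Er !exprMn !mulrA.
  by rewrite ler_wpM2r ?exprn_ge0 // ler_wpM2r ?exprn_ge0.
have Mr : M \is Num.real := ger0_real M0.
apply: le_eps => [||e e0].
- by rewrite realM ?normr_real ?realX ?gtr0_real.
- done.
have e2 : 0 < e / 2 by rewrite divr_gt0.
have B1 : 0 < B + 1 by rewrite ltr_wpDl.
have q1n : 0 < 1 - q1 by rewrite subr_gt0.
have epos : 0 < e / 2 * (1 - q1) / (B + 1).
  by apply: divr_gt0 => //; exact: mulr_gt0.
have [N0 HN0] := expr_small q2p q21 epos.
set N := (N0 + k).+1.
have Np : (0 < N)%N by [].
have [w pw] := C_prim R Np.
have w1 := norm_prim Np pw.
have [v Hv] : exists v : nat -> C, forall j, has_sum (pser d (r * w ^+ j)) (v j).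
  have /choice[v Hv] : forall j, exists l, has_sum (pser d (r * w ^+ j)) l.
    move=> j; apply: dA.
    by rewrite normrM normrX w1 expr1n mulr1 (ger0_norm (ltW r0)).
  by exists v.
pose c j := N%:R^-1 * (w ^+ (N - k)) ^+ j.
have HA := hs_sum (N:=N) (w := fun j l => c j * pser d (r * w ^+ j) l)
   (a := fun j => c j * v j) (fun j _ => hs_scale (c j) (Hv j)).
set A := \sum_(j < N) c j * v j in HA.
pose t l := if (N %| l + (N - k))%N then d l * r ^+ l else 0.
have Ht : has_sum t A.
  apply: hs_ext HA => l /=.
  have E : forall j : 'I_N, c j * pser d (r * w ^+ j) l =
      d l * r ^+ l * N%:R^-1 * (w ^+ (l + (N - k))) ^+ j.
    move=> j; rewrite /c /pser exprMn -!exprM mulnDl exprD [(l * j)%N]mulnC.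
    ring.
  rewrite (eq_bigr _ (fun j _ => E j)) -mulr_sumr prim_sum // /t.
  case: ifP => _; last by rewrite mulr0.
  by rewrite mulfVK // pnatr_eq0 -lt0n.
have hA : `|A| <= M.
  rewrite /A; apply: le_trans (ler_norm_sum _ _ _) _.
  have Hj : forall j : 'I_N, `|c j * v j| <= N%:R^-1 * M.
    move=> j; rewrite /c !normrM !normrX w1 !expr1n mulr1 ger0_norm ?invr_ge0 ?ler0n //.
    rewrite ler_wpM2l ?invr_ge0 ?ler0n //; apply: Hb (Hv j).
    by rewrite normrM normrX w1 expr1n mulr1 (ger0_norm (ltW r0)).
  apply: le_trans (ler_sum _ (fun j _ => Hj j)) _.
  by rewrite sumr_const card_ord -mulrnAl -[_ *+ N]mulr_natr mulVf ?mul1r // pnatr_eq0 -lt0n.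
have [N1 HN1] := Ht _ e2.
set n := maxn N1 k.+1.
have kn : (k < n)%N by rewrite leq_maxr.
have HS := HN1 n (leq_maxl _ _).
rewrite (bigD1 (Ordinal kn)) // in HS.
have tk : t k = d k * r ^+ k.
  have kN : (k <= N)%N := leqW (leq_addl N0 k).
  by rewrite /t subnKC // dvdnn.
pose rest := \sum_(i < n | i != Ordinal kn) t i.
have HS2 : `|t k + rest - A| < e / 2 := HS.
clear HS.
have Hrest : `|rest| <= e / 2.
  apply: le_trans (ler_norm_sum _ _ _) _.
  have Hi : forall i : 'I_n, i != Ordinal kn -> `|t i| <= B * q2 ^+ N0 * q1 ^+ i.
    move=> i ik; rewrite /t; case: ifP => Hd; last first.
      by rewrite normr0 ?mulr_ge0 ?exprn_ge0.
    have ik' : (i : nat) != k.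
      by apply: contra ik => /eqP h; apply/eqP/val_inj.
    have iN : (N0 <= i)%N.
      exact: (@dvd_aux N0 k i).
    rewrite normrM normrX (ger0_norm (ltW r0)).
    apply: le_trans (Hdl i) _; rewrite ler_wpM2r ?exprn_ge0 // ler_wpM2l //.
    exact: ler_wiXn2l (ltW q21) _ _ iN.
  apply: le_trans (ler_sum _ Hi) _.
  have G0 : forall i : 'I_n, 0 <= B * q2 ^+ N0 * q1 ^+ i.
    by move=> i; rewrite !mulr_ge0 ?exprn_ge0.
  apply: le_trans (_ : _ <= \sum_(i < n) B * q2 ^+ N0 * q1 ^+ i) _.
    rewrite big_mkcond; apply: ler_sum => i _; case: ifP => _ //; exact: G0.
  rewrite -mulr_sumr.
  apply: le_trans (_ : _ <= B * q2 ^+ N0 * (1 - q1)^-1) _.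
    apply: ler_wpM2l; first by rewrite mulr_ge0 ?exprn_ge0.
    exact: geo_le.
  have h := ltW (HN0 N0 (leqnn _)); rewrite ler_pdivlMr // in h.
  rewrite ler_pdivrMr //.
  by apply: le_trans h; rewrite mulrC ler_wpM2l ?exprn_ge0 // lerDl ler01.
have Ek : d k * r ^+ k = (t k + rest - A) - rest + A by rewrite tk; ring.
have Ek2 : `|d k| * r ^+ k = `|d k * r ^+ k| by rewrite normrM normrX (ger0_norm (ltW r0)).
suff Fin : `|d k * r ^+ k| <= M + e by rewrite -Ek2 in Fin; exact: Fin.
rewrite Ek.
apply: le_trans (ler_normD _ _) _.
apply: le_trans (lerD (_ : _ <= e) hA) _; last by rewrite addrC.
apply: le_trans (ler_normB _ _) _; rewrite (splitr e).
exact: lerD (ltW HS2) Hrest.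
Qed.

End Aux3.

Section Main.
Variable R : realType.
Local Notation C := R[i].

Lemma pser_Pop (a : nat -> C) x w k : pser (Pop x a) w k = pser a (x * w) k.
Proof. by rewrite /pser /Pop exprMn mulrA. Qed.

Lemma pser_had_Pop (f g : nat -> C) z k :
  pser (hadamard f (Pop z g)) 1 k = pser (hadamard f g) z k.
Proof. by rewrite /pser /hadamard /Pop expr1n mulr1 mulrA. Qed.

Lemma inAbar_inA (a : nat -> C) : inAbar a -> inA a.
Proof.
move=> [rho [rho1 H]] z hz; apply: H; exact: lt_trans hz rho1.
Qed.

Lemma dualT_sub_dual (V : set (nat -> C)) :
  complete (dualT V) -> dualT V `<=` dual V.
Proof.
move=> Hc g Tg; have [[gA g0] Hg] := Tg; split.
  by split => //; apply: inAbar_inA.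
move=> f Vf z hz l Hl.
have [_ Hz] := Hc g Tg z (ltW hz).
apply: (Hz f Vf l); apply: hs_ext Hl => k; by rewrite pser_had_Pop.
Qed.

Lemma Pop_dualT (V : set (nat -> C)) g z :
  dual V g -> `|z| < 1 -> dualT V (Pop z g).
Proof.
move=> [[gA g0] Hg] hz; split; last first.
  move=> f Vf l Hl; apply: (Hg f Vf z hz l); apply: hs_ext Hl => k.
  by rewrite pser_had_Pop.
split; last by rewrite /Pop g0 expr0 mulr1.
have [->|z0] := eqVneq z 0.
  exists 2; split; first by rewrite ltr1n.
  move=> w _; have [l Hl] : converges (pser g 0) by apply: gA; rewrite normr0 ltr01.
  by exists l; apply: hs_ext Hl => k; rewrite pser_Pop mul0r.
have zp : 0 < `|z| by rewrite normr_gt0.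
exists `|z|^-1; split; first by rewrite invf_gt1.
move=> w hw; have [l Hl] : converges (pser g (z * w)).
  apply: gA; rewrite normrM.
  by rewrite -ltr_pdivlMl // mulr1.
by exists l; apply: hs_ext Hl => k; rewrite pser_Pop.
Qed.


Lemma texp (t t0 : C) k : 1 <= t -> t <= t0 -> 1 < t0 ->
  t ^+ k - 1 <= (t - 1) / (t0 - 1) * t0 ^+ k.
Proof.
move=> t1 tt0 t01.
have t0p : 0 < t0 - 1 by rewrite subr_gt0.
have tp : 0 <= t - 1 by rewrite subr_ge0.
rewrite subrX1.
apply: le_trans (_ : _ <= (t - 1) * \sum_(i < k) t0 ^+ i) _.
  apply: ler_wpM2l => //; apply: ler_sum => i _; apply: lerXn2r => //.
  - by rewrite nnegrE (le_trans ler01).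
  - by rewrite nnegrE (le_trans ler01) // (le_trans t1).
rewrite -mulrA; apply: ler_wpM2l => //.
rewrite ler_pdivlMl //.
have E : (t0 - 1) * \sum_(i < k) t0 ^+ i = t0 ^+ k - 1 by rewrite subrX1.
by rewrite E gerBl ler01.
Qed.

Lemma sum_geo_bound (F : nat -> C) (A p : C) N : 0 <= p -> p < 1 -> 0 <= A ->
  (forall k, `|F k| <= A * p ^+ k) -> `|\sum_(k < N) F k| <= A / (1 - p).
Proof.
move=> p0 p1 A0 H; apply: le_trans (ler_norm_sum _ _ _) _.
apply: le_trans (_ : _ <= \sum_(k < N) A * p ^+ k) _.
  by apply: ler_sum => k _; exact: H.
rewrite -mulr_sumr; apply: ler_wpM2l => //; exact: geo_le.
Qed.

Lemma decomp3 (a b c t : C) k : a * b * 1 ^+ k =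
  a * b * (1 - t ^+ k) + (a - c) * (b * t ^+ k) + c * (b * t ^+ k) * 1 ^+ k.
Proof. rewrite expr1n; ring. Qed.

Lemma split3 (e : C) : e = e / 3 + e / 3 + e / 3.
Proof. have h : (3 : C) != 0 by rewrite pnatr_eq0. by field. Qed.

Lemma prod_bound (x y r1 s p A B : C) k : 0 <= p -> 0 <= r1 -> 0 <= s ->
  `|x| * r1 ^+ k <= A -> `|y| * s ^+ k <= B ->
  `|x| * `|y| * (r1 ^+ k * s ^+ k * p ^+ k) <= A * B * p ^+ k.
Proof.
move=> p0 r0 s0 hx hy.
have -> : `|x| * `|y| * (r1 ^+ k * s ^+ k * p ^+ k) =
  (`|x| * r1 ^+ k) * (`|y| * s ^+ k) * p ^+ k by ring.
apply: ler_wpM2r; first exact: exprn_ge0.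
by apply: ler_pM => //; rewrite mulr_ge0 ?exprn_ge0.
Qed.

Lemma HL (V : set (nat -> C)) g : V `<=` inA (R:=R) -> compactA V -> dualT V g ->
  exists t : C, 1 < t /\ dualT V (Pop t g).
Proof.
move=> VA [_ Hcov] [[[rho [rho1 Hrho]] g0] Hg].
have [s1 srho] := midf_lt rho1.
set s := (1 + rho) / 2 in s1 srho; clearbody s.
have s0 : 0 < s := lt_trans ltr01 s1.
have Hcs : converges (pser g s) by apply: Hrho; rewrite ger0_norm ?ltW.
have [Bg [Bg0 HBg]] := pser_bound Hcs; rewrite (ger0_norm (ltW s0)) in HBg.
have [t01 t0s] := midf_lt s1.
set t0 := (1 + s) / 2 in t01 t0s; clearbody t0.
have t0p : 0 < t0 := lt_trans ltr01 t01.
have a1 : t0 / s < 1 by rewrite ltr_pdivrMr // mul1r.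
have [ar1 r11] := midf_lt a1.
set r1 := (t0 / s + 1) / 2 in ar1 r11; clearbody r1.
have r1p : 0 < r1 by apply: le_lt_trans ar1; rewrite divr_ge0 ?ltW.
have rs0 : 0 < r1 * s by rewrite mulr_gt0.
pose p := t0 / (r1 * s).
have p0 : 0 <= p by rewrite divr_ge0 ?ltW.
have p1 : p < 1.
  by rewrite /p ltr_pdivrMr // mul1r -ltr_pdivrMr.
have Ept : forall k, t0 ^+ k = r1 ^+ k * s ^+ k * p ^+ k.
  move=> k; rewrite -!exprMn; congr (_ ^+ _).
  by rewrite /p mulrC divfK // lt0r_neq0.
clearbody p.
pose tm (m : nat) := 1 + (t0 - 1) / (m.+1)%:R.
have tm1 : forall m, 1 < tm m.
  by move=> m; rewrite /tm ltrDl divr_gt0 ?subr_gt0 ?ltr0n.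
have tmt0 : forall m, tm m <= t0.
  move=> m; rewrite /tm -lerBrDl ler_pdivrMr ?ltr0n //.
  by rewrite ler_peMr ?subr_ge0 ?(ltW t01) // ler1n.
have tmd : forall m, (tm m - 1) / (t0 - 1) = (m.+1)%:R^-1.
  move=> m; rewrite /tm.
  have h1 : t0 - 1 != 0 by rewrite subr_eq0 gt_eqF.
  have h2 : (m.+1)%:R != 0 :> C by rewrite pnatr_eq0.
  by rewrite addrAC subrr add0r mulrAC mulfV // mul1r.
pose P (n : nat) (f' : nat -> C) := forall m, (n <= m)%N ->
  forall l, has_sum (pser (hadamard f' (Pop (tm m) g)) 1) l -> l <> 0.
pose O (n : nat) (f : nat -> C) := inA f /\ exists r eps : C,
  [/\ 0 <= r, r < 1, 0 < eps & forall g', inA g' ->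
     (forall z : C, `|z| <= r -> forall lf lg : C,
       has_sum (pser f z) lf -> has_sum (pser g' z) lg -> `|lg - lf| < eps) ->
     P n g'].
have Omono : forall n n', (n <= n')%N -> forall f, O n f -> O n' f.
  move=> n n' nn' f [fA [r [eps [r0 r1' e0 H]]]]; split => //.
  exists r, eps; split => // g2 g2A Hc mm nm.
  exact: (H g2 g2A Hc mm (leq_trans nn' nm)).
have Oopen : forall n, openA (O n).
  move=> n f fA [_ [r [eps [r0 rr e0 H]]]].
  have e2 : 0 < eps / 2 by rewrite divr_gt0.
  exists r, (eps / 2); split => // g2 g2A Hc2; split => //.
  exists r, (eps / 2); split => // g3 g3A Hc3.
  have Hcl : forall z : C, `|z| <= r -> forall lf lg : C,
      has_sum (pser f z) lf -> has_sum (pser g3 z) lg -> `|lg - lf| < eps.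
    move=> z hz lf lg h1 h3; have [lm hm] := g2A z (le_lt_trans hz rr).
    apply: le_lt_trans (ler_distD lm _ _) _; rewrite (splitr eps).
    by apply: ltrD; [exact: Hc3 z hz lm lg hm h3 | exact: Hc2 z hz lf lm h1 hm].
  exact: (H g3 g3A Hcl).
have Ocov : forall f, V f -> exists n, O n f.
  move=> f Vf; have fA := VA f Vf; have Hgf := Hg f Vf.
  apply: contrapT => Hno.
  suff H0 : has_sum (pser (hadamard f g) 1) 0 by exact: Hgf 0 H0 erefl.
  have Hcf : converges (pser f r1) by apply: fA; rewrite ger0_norm ?ltW.
  have [Bf [Bf0 HBf]] := pser_bound Hcf; rewrite (ger0_norm (ltW r1p)) in HBf.
  move=> e e0.
  have e3 : 0 < e / 3 by rewrite divr_gt0 ?ltr0n.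
  have p1' : 0 < 1 - p by rewrite subr_gt0.
  pose K := Bf * Bg / (1 - p).
  have K0 : 0 <= K by rewrite /K divr_ge0 ?mulr_ge0 ?(ltW p1').
  have [n Hn] := archiC (ger0_real K0) e3.
  pose eps := e / 3 * (1 - p) / (Bg + 1).
  have Bg1 : 0 < Bg + 1 by rewrite ltr_wpDl.
  have eps0 : 0 < eps by rewrite /eps; apply: divr_gt0 => //; exact: mulr_gt0.
  have [g' [g'A [Hcl [m [nm [l [Hl l0]]]]]]] : exists g' : nat -> C, inA g' /\
      (forall z : C, `|z| <= r1 -> forall lf lg : C,
        has_sum (pser f z) lf -> has_sum (pser g' z) lg -> `|lg - lf| < eps) /\
      exists m, (n <= m)%N /\ exists l,
        has_sum (pser (hadamard g' (Pop (tm m) g)) 1) l /\ l = 0.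
    apply: contrapT => Hne; apply: Hno; exists n; split => //.
    exists r1, eps; split => //; first exact: ltW.
    move=> g2 g2A Hc2 mm nm l Hl l0; apply: Hne; exists g2; split => //.
    split => //; exists mm; split => //; exists l; split => //.
  subst l.
  have [N1 HN1] := Hl _ e3.
  exists N1 => N' hN'.
  have X3 := HN1 N' hN'.
  have tm1' := tm1 m; have tmt := tmt0 m; have tmdm := tmd m.
  set t := tm m in X3 tm1' tmt tmdm.
  have t0' : 0 <= t := ltW (lt_trans ltr01 tm1').
  have Eq : \sum_(k < N') pser (hadamard f g) 1 k - 0 =
     \sum_(k < N') (f k * g k * (1 - t ^+ k)) +
     \sum_(k < N') ((f k - g' k) * (g k * t ^+ k)) +
     (\sum_(k < N') pser (hadamard g' (Pop t g)) 1 k - 0).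
    rewrite !subr0 -!big_split; apply: eq_bigr => k _.
    rewrite /pser /hadamard /Pop; exact: decomp3.
  have H1 : `|\sum_(k < N') (f k * g k * (1 - t ^+ k))| <= e / 3.
    have mp : 0 < (m.+1)%:R :> C by rewrite ltr0n.
    apply: le_trans (sum_geo_bound (F := fun k => f k * g k * (1 - t ^+ k))
      (A := (m.+1)%:R^-1 * (Bf * Bg)) N' p0 p1 _ _) _.
    - by rewrite mulr_ge0 ?invr_ge0 ?ler0n ?mulr_ge0.
    - move=> k /=; rewrite !normrM.
      have E1 : `|1 - t ^+ k| = t ^+ k - 1.
        by rewrite distrC ger0_norm // subr_ge0 exprn_ege1 // ltW.
      rewrite E1.
      apply: le_trans (_ : _ <= `|f k| * `|g k| * ((m.+1)%:R^-1 * t0 ^+ k)) _.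
        apply: ler_wpM2l; first by rewrite mulr_ge0.
        by rewrite -tmdm; apply: texp => //; rewrite ltW.
      rewrite Ept mulrCA -[leRHS]mulrA; apply: ler_wpM2l; first by rewrite invr_ge0 ler0n.
      exact: prod_bound p0 (ltW r1p) (ltW s0) (HBf k) (HBg k).
    - rewrite -mulrA; change ((m.+1)%:R^-1 * K <= e / 3).
      rewrite mulrC ler_pdivrMr //; apply: le_trans (ltW Hn) _.
      rewrite mulr_natr; apply: ler_wpMn2l; [exact: ltW | exact: leqW].
  have H2 : `|\sum_(k < N') ((f k - g' k) * (g k * t ^+ k))| <= e / 3.
    pose d := fun k => f k - g' k.
    have hd : forall z lf lg, has_sum (pser f z) lf -> has_sum (pser g' z) lg ->
        has_sum (pser d z) (lf + (-1) * lg).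
      move=> z lf lg hf hg; apply: hs_ext (hs_add hf (hs_scale (-1) hg)) => k.
      by rewrite /pser /d mulN1r mulrBl.
    have dA : inA d.
      move=> z hz; have [lf hf] := fA z hz; have [lg hg] := g'A z hz.
      by exists (lf + (-1) * lg); apply: hd.
    have Hdb : forall k, `|d k| * r1 ^+ k <= eps.
      refine (cauchy_est dA r1p r11 _).
      move=> z hz l hl; have hz1 : `|z| < 1 := le_lt_trans hz r11.
      have [lf hf] := fA z hz1; have [lg hg] := g'A z hz1.
      rewrite (hs_unique hl (hd z lf lg hf hg)) mulN1r distrC.
      exact: ltW (Hcl z hz lf lg hf hg).
    apply: le_trans (sum_geo_bound (F := fun k => (f k - g' k) * (g k * t ^+ k))
      (A := eps * Bg) N' p0 p1 _ _) _.
    - by rewrite mulr_ge0 // ltW.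
    - move=> k /=; rewrite !normrM (ger0_norm (exprn_ge0 k t0')) mulrA.
      apply: le_trans (_ : _ <= `|d k| * `|g k| * (r1 ^+ k * s ^+ k * p ^+ k)) _.
        rewrite -Ept; apply: ler_wpM2l; first by rewrite mulr_ge0.
        by apply: lerXn2r; rewrite ?nnegrE // ltW.
      exact: prod_bound p0 (ltW r1p) (ltW s0) (Hdb k) (HBg k).
    - rewrite ler_pdivrMr //.
      have X0 : 0 <= e / 3 * (1 - p) by apply: mulr_ge0; apply: ltW.
      have Y1 : (Bg + 1)^-1 * Bg <= 1.
        by rewrite mulrC ler_pdivrMr // mul1r lerDl ler01.
      rewrite /eps -mulrA; exact: ler_piMr X0 Y1.
  rewrite Eq [X in _ < X](split3 e).
  apply: le_lt_trans (ler_normD _ _) _.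
  apply: ler_ltD => //; apply: le_trans (ler_normD _ _) _.
  exact: lerD.
have [N [tt Htt]] := Hcov _ O Oopen Ocov.
pose nst := (\max_(j < N) tt j)%N.
exists (tm nst); split; first exact: tm1.
have tp : 0 < tm nst := lt_trans ltr01 (tm1 _).
split.
  split; last by rewrite /Pop g0 expr0 mulr1.
  exists (rho / tm nst); split.
    by rewrite ltr_pdivlMr // mul1r (le_lt_trans (tmt0 _)) // (lt_trans t0s).
  move=> w hw; have [l Hl] : converges (pser g (tm nst * w)).
    apply: Hrho; rewrite normrM (ger0_norm (ltW tp)) mulrC -ltr_pdivlMr //.
  by exists l; apply: hs_ext Hl => k; rewrite pser_Pop.
move=> f Vf l Hl.
have [j Hj] := Htt f Vf.
have Of := Omono _ _ (@leq_bigmax _ tt j) f Hj.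
move: Of => [fA [r [eps [r0 rr e0 H]]]].
have Hcl : forall z : C, `|z| <= r -> forall lf lg : C,
    has_sum (pser f z) lf -> has_sum (pser f z) lg -> `|lg - lf| < eps.
  by move=> z hz lf lg h1 h2; rewrite (hs_unique h2 h1) subrr normr0.
exact: (H f fA Hcl nst (leqnn _) l Hl).
Qed.

End Main.

Theorem theorem3 (R : realType) (V : set (nat -> R[i])) :
  V `<=` inA0 (R:=R) -> compactA V -> complete (dualT V) ->
  dual (dual V) = perp (dualT V).
Proof.
move=> VA Vc Hc; apply/seteqP; split => h.
  move=> [hA Hh]; split => // g Tg l Hl.
  have VA' : V `<=` inA (R:=R) by move=> f /VA [].
  have [t [t1 Tt]] := HL VA' Vc Tg.
  have Dt := dualT_sub_dual Hc Tt.
  have tp : 0 < t := lt_trans ltr01 t1.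
  have tn : t != 0 := lt0r_neq0 tp.
  apply: (Hh _ Dt t^-1 _ l).
    by rewrite normfV (ger0_norm (ltW tp)) invf_lt1.
  apply: hs_ext Hl => k; rewrite /pser /hadamard /Pop expr1n mulr1.
  by rewrite exprVn; field; rewrite expf_neq0.
move=> [hA Hh]; split => // g Dg z hz l Hl.
apply: (Hh _ (Pop_dualT Dg hz) l); apply: hs_ext Hl => k.
by rewrite /pser /hadamard /Pop expr1n mulr1; ring.
Qed.
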